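(* Let $d,n,m\geq1$ be integers, and let $\mathsf{M}_1$ be an $n$-outcome POVM and $\mathsf{M}_2$ an $m$-outcome POVM on $\mathbb{C}^d$. Define $$\bar P(\mathsf{M}_1,\mathsf{M}_2)=\frac{1}{2nm}\sum_{x=1}^n\sum_{y=1}^m\big\|\mathsf{M}_1(x)+\mathsf{M}_2(y)\big\|.$$ If $\bar P(\mathsf{M}_1,\mathsf{M}_2)>\frac12\left(1+\frac{d}{nm}\right)$, then $\mathsf{M}_1$ and $\mathsf{M}_2$ are incompatible.
   Context: $\|\cdot\|$ is the operator norm. Two POVMs $\mathsf{M}_1$ (outcomes $x$) and $\mathsf{M}_2$ (outcomes $y$) are compatible if there is a POVM $\mathsf{G}$ on the product outcome set with $\sum_y\mathsf{G}(x,y)=\mathsf{M}_1(x)$ and $\sum_x\mathsf{G}(x,y)=\mathsf{M}_2(y)$; otherwise incompatible. $\bar P(\mathsf{M}_1,\mathsf{M}_2)$ is the maximum over encodings $\{\mathcal{E}(x,y)\}$ of states of the average success probability $\frac{1}{2nm}\sum_{x,y}\mathrm{tr}[\mathcal{E}(x,y)(\mathsf{M}_1(x)+\mathsf{M}_2(y))]$. *)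

(* Defs.v *)
From HB Require Import structures.
From mathcomp Require Import all_boot all_order all_algebra.
From mathcomp Require Import complex.
From mathcomp Require Import classical_sets reals.
Set Implicit Arguments. Unset Strict Implicit. Unset Printing Implicit Defensive.
Import Order.TTheory GRing.Theory Num.Theory.
Local Open Scope ring_scope.
Local Open Scope complex_scope.

Definition adjmx (R : realType) (p q : nat) (A : 'M[R[i]]_(p, q)) : 'M[R[i]]_(q, p) :=
  (map_mx (fun z : R[i] => z^*) A)^T.

(* positive semidefinite: v^* A v >= 0 (in the order of R[i]: real and nonnegative) *)
Definition psd (R : realType) (d : nat) (A : 'M[R[i]]_d) : Prop :=
  forall v : 'cV[R[i]]_d, 0 <= (adjmx v *m A *m v) 0 0.

Definition POVM (R : realType) (d n : nat) (M : 'I_n -> 'M[R[i]]_d) : Prop :=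
  (forall x, psd (M x)) /\ \sum_(x < n) M x = 1%:M.

Definition vnorm2 (R : realType) (d : nat) (v : 'cV[R[i]]_d) : R :=
  \sum_(i < d) (complex.Re (v i 0) ^+ 2 + complex.Im (v i 0) ^+ 2).

Definition opnorm (R : realType) (d : nat) (A : 'M[R[i]]_d) : R :=
  reals.sup [set Num.sqrt (vnorm2 (A *m v)) | v in [set v : 'cV[R[i]]_d | vnorm2 v = 1]]%classic.

Definition compatible (R : realType) (d n m : nat)
  (M1 : 'I_n -> 'M[R[i]]_d) (M2 : 'I_m -> 'M[R[i]]_d) : Prop :=
  exists G : 'I_n -> 'I_m -> 'M[R[i]]_d,
    [/\ (forall x y, psd (G x y)),
        \sum_(x < n) \sum_(y < m) G x y = 1%:M,
        (forall x, \sum_(y < m) G x y = M1 x) &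
        (forall y, \sum_(x < n) G x y = M2 y)].

Definition Pbar (R : realType) (d n m : nat)
  (M1 : 'I_n -> 'M[R[i]]_d) (M2 : 'I_m -> 'M[R[i]]_d) : R :=
  (2 * n%:R * m%:R)^-1 * \sum_(x < n) \sum_(y < m) opnorm (M1 x + M2 y).

(* Main.v *)
Require Import Defs.
From HB Require Import structures.
From mathcomp Require Import all_boot all_order all_algebra.
From mathcomp Require Import complex.
From mathcomp Require Import classical_sets reals.
From mathcomp Require Import ring lra.
Import Order.TTheory GRing.Theory Num.Theory.
Local Open Scope ring_scope.

Local Notation Re := complex.Re.
Local Notation Im := complex.Im.
Section S.
Context {R : realType} {d : nat}.
Local Open Scope complex_scope.
Notation C := R[i].
Notation vec := 'cV[C]_d.
Notation mat := 'M[C]_d.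

Definition form (A : mat) (u v : vec) : C := (adjmx u *m A *m v) 0 0.

Lemma adjmxD (u v : vec) : adjmx (u + v) = adjmx u + adjmx v.
Proof. by apply/matrixP => i j; rewrite !mxE rmorphD. Qed.

Lemma adjmxZ t (u : vec) : adjmx (t *: u) = t^* *: adjmx u.
Proof. by apply/matrixP => i j; rewrite !mxE rmorphM. Qed.

Lemma form_expand A u v t : form A (u + t *: v) (u + t *: v) =
  form A u u + t * form A u v + t^* * form A v u + t^* * t * form A v v.
Proof.
rewrite /form adjmxD adjmxZ !mulmxDl !mulmxDr -!scalemxAl -!scalemxAr !mxE.
ring.
Qed.

Lemma ReM (a b : C) : Re (a * b) = Re a * Re b - Im a * Im b.
Proof. by case: a => ? ?; case: b => ? ?; simpc. Qed.
Lemma ImM (a b : C) : Im (a * b) = Re a * Im b + Im a * Re b.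
Proof. by case: a => ? ?; case: b => ? ?; simpc. Qed.
Lemma ReJ (a : C) : Re (a^*) = Re a. Proof. by case: a => ? ?; simpc. Qed.
Lemma ImJ (a : C) : Im (a^*) = - Im a. Proof. by case: a => ? ?; simpc. Qed.
Lemma ReD (a b : C) : Re (a + b) = Re a + Re b. Proof. by case: a => ? ?; case: b => ? ?; simpc. Qed.
Lemma ImD (a b : C) : Im (a + b) = Im a + Im b. Proof. by case: a => ? ?; case: b => ? ?; simpc. Qed.

Lemma quad (a b N : R) : 0 <= a -> 0 <= b -> 0 <= N ->
  (forall s, 0 <= a - 2 * s * N + s ^+ 2 * N * b) -> N <= a * b.
Proof.
move=> a0 b0 N0 H.
have [bp|] := ltrP 0 b.
  have := H b^-1.
  have e : a - 2 * b^-1 * N + b^-1 ^+ 2 * N * b = a - b^-1 * N.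
    by field; rewrite gt_eqF.
  rewrite e subr_ge0 ler_pdivrMl // => h; by rewrite mulrC.
move=> bl; have b00 : b = 0 by apply/le_anti; rewrite bl b0.
subst b; rewrite mulr0.
have [Np|] := ltrP 0 N; last by [].
have := H ((a + 1) / N).
have e : a - 2 * ((a + 1) / N) * N + ((a + 1) / N) ^+ 2 * N * 0 = - a - 2.
  by field; rewrite gt_eqF.
rewrite e => h. lra.
Qed.

Lemma CS (A : mat) u v : psd A ->
  Re (form A u v) ^+ 2 + Im (form A u v) ^+ 2 <= Re (form A u u) * Re (form A v v).
Proof.
move=> pA.
have q t : 0 <= form A (u + t *: v) (u + t *: v) := pA (u + t *: v).
have Iq t := ger0_Im (q t).
have Rq t : 0 <= Re (form A (u + t *: v) (u + t *: v)).
  by have := q t; rewrite lecE => /andP[_]; rewrite /=.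
have a0 : Im (form A u u) = 0 by apply: ger0_Im; apply: pA.
have b0 : Im (form A v v) = 0 by apply: ger0_Im; apply: pA.
have ar : 0 <= Re (form A u u) by have := pA u; rewrite lecE => /andP[_].
have br : 0 <= Re (form A v v) by have := pA v; rewrite lecE => /andP[_].
have I1 := Iq 1; have Ii := Iq 'i.
rewrite form_expand !(ImD, ImM, ReM, ReJ, ImJ) a0 b0 /= in I1.
rewrite form_expand !(ImD, ImM, ReM, ReJ, ImJ) a0 b0 /= in Ii.
apply: quad => //; first by nra.
move=> s; have := Rq (Complex (- s * Re (form A u v)) (s * Im (form A u v))).
rewrite form_expand !(ReD, ImD, ImM, ReM, ReJ, ImJ) /= b0.
move: I1 Ii ar br.
move: (Re (form A u v)) (Im (form A u v)) (Re (form A v u)) (Im (form A v u)) (Re (form A u u)) (Re (form A v v)) => zr zi wr wi a b.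
move=> I1 Ii ar br h.
nra.
Qed.

Definition Q (A : mat) u := Re (form A u u).

Lemma formDm A B u v : form (A + B) u v = form A u v + form B u v.
Proof. by rewrite /form mulmxDr mulmxDl mxE. Qed.

Lemma Q_sum k (F : 'I_k -> mat) u : Q (\sum_(i < k) F i) u = \sum_(i < k) Q (F i) u.
Proof.
apply: (big_morph (fun A => Q A u)).
  by move=> A B; rewrite /Q formDm ReD.
by rewrite /Q /form mulmx0 mul0mx mxE.
Qed.

Lemma form1 u v : form 1%:M u v = \sum_i (u i 0)^* * v i 0.
Proof. by rewrite /form mulmx1 mxE; apply: eq_bigr => i _; rewrite !mxE. Qed.

Lemma ReJM (z : C) : Re (z^* * z) = Re z ^+ 2 + Im z ^+ 2.
Proof. rewrite ReM ReJ ImJ; ring. Qed.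

Lemma Q1 u : Q 1%:M u = vnorm2 u.
Proof.
rewrite /Q form1 /vnorm2 (raddf_sum (@Re R)).
by apply: eq_bigr => i _; apply: ReJM.
Qed.

Lemma psd1 : psd (1%:M : mat).
Proof.
move=> v; rewrite -/(form _ v v) form1; apply: sumr_ge0 => i _.
by rewrite mulrC; apply: mulcJ_ge0.
Qed.

Lemma vnorm2_ge0 (u : vec) : 0 <= vnorm2 u.
Proof. by apply: sumr_ge0 => i _; apply: addr_ge0; apply: sqr_ge0. Qed.

Lemma formM A u v : form A u v = form 1%:M u (A *m v).
Proof. by rewrite /form mulmx1 mulmxA. Qed.

Lemma form_delta A i (u : vec) : form A (delta_mx i 0) u = (A *m u) i 0.
Proof.
rewrite formM form1 (bigD1 i) //= big1 ?addr0; last first.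
  by move=> j /negPf ji; rewrite mxE ji /= raddf0 mul0r.
by rewrite mxE !eqxx /= rmorph1 mul1r.
Qed.

Lemma form_delta2 A i : form A (delta_mx i 0) (delta_mx i 0) = A i i.
Proof.
rewrite form_delta mxE (bigD1 i) //= big1 ?addr0; last first.
  by move=> j /negPf ji; rewrite mxE ji /= mulr0.
by rewrite mxE !eqxx mulr1.
Qed.

Lemma psdQ A u : psd A -> 0 <= Q A u.
Proof. by move=> pA; have := pA u; rewrite lecE => /andP[_]. Qed.

Lemma psdIm A u : psd A -> Im (form A u u) = 0.
Proof. by move=> pA; apply: ger0_Im; apply: pA. Qed.

Lemma Gbound G u : psd G -> Q G u <= vnorm2 u * \sum_i Re (G i i).
Proof.
move=> pG.
set q := Q G u; set t := \sum_i _.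
have q0 : 0 <= q by apply: psdQ.
have t0 : 0 <= t.
  by apply: sumr_ge0 => i _; rewrite -form_delta2; apply: psdQ.
have h1 : q ^+ 2 <= vnorm2 u * vnorm2 (G *m u).
  have := CS 1%:M u (G *m u) psd1.
  rewrite -formM -/(Q 1%:M u) -/(Q 1%:M (G *m u)) !Q1 psdIm // -/(Q G u) -/q.
  by rewrite expr0n /= addr0.
have h2 : vnorm2 (G *m u) <= t * q.
  rewrite /vnorm2 /t big_distrl /=; apply: ler_sum => i _.
  have := CS G (delta_mx i 0) u pG.
  by rewrite form_delta form_delta2 -/(Q G u).
have h3 : q ^+ 2 <= vnorm2 u * t * q.
  apply: (le_trans h1); rewrite -mulrA; apply: ler_wpM2l => //; apply: vnorm2_ge0.
have [qp|] := ltrP 0 q.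
  by move: h3; rewrite expr2 ler_pM2r.
move=> ql; have -> : q = 0 by apply/le_anti; rewrite ql q0.
by apply: mulr_ge0 => //; apply: vnorm2_ge0.
Qed.

Lemma opbound A c v : psd A -> 0 <= c -> (forall w, Q A w <= c * vnorm2 w) ->
  vnorm2 v = 1 -> Num.sqrt (vnorm2 (A *m v)) <= c.
Proof.
move=> pA c0 H v1.
set N := vnorm2 (A *m v).
have N0 : 0 <= N by apply: vnorm2_ge0.
have h1 : N ^+ 2 <= Q A (A *m v) * Q A v.
  have := CS A (A *m v) v pA.
  rewrite -/(Q A _) -/(Q A v) formM -/(Q 1%:M (A *m v)) Q1 -/N.
  move=> h; apply: le_trans h; rewrite lerDl; apply: sqr_ge0.
have h2 : N ^+ 2 <= (c * N) * c.
  apply: (le_trans h1); apply: ler_pM; rewrite ?psdQ //.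
  by rewrite -[c]mulr1 -v1; apply: H.
have h3 : N <= c ^+ 2.
  have [Np|] := ltrP 0 N.
    by move: h2; rewrite expr2 mulrAC ler_pM2r // mulrC.
  move=> Nl; have -> : N = 0 by apply/le_anti; rewrite Nl N0.
  by apply: sqr_ge0.
by rewrite -(ger0_norm c0) -sqrtr_sqr ler_sqrt // sqr_ge0.
Qed.

Lemma comb n m (f : 'I_n -> 'I_m -> R) x y : (forall a b, 0 <= f a b) ->
  \sum_(b < m) f x b + \sum_(a < n) f a y <= \sum_(a < n) \sum_(b < m) f a b + f x y.
Proof.
move=> f0.
rewrite [\sum_(a < n) f a y](bigD1 x) //= [\sum_(a < n) \sum_(b < m) _](bigD1 x) //=.
have h : \sum_(a < n | a != x) f a y <= \sum_(a < n | a != x) \sum_(b < m) f a b.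
  apply: ler_sum => a _; rewrite (bigD1 y) //= lerDl; apply: sumr_ge0 => *; exact: f0.
lra.
Qed.

End S.

Theorem proposition3 (R : realType) (d n m : nat)
  (M1 : 'I_n -> 'M[R[i]]_d) (M2 : 'I_m -> 'M[R[i]]_d) :
  (1 <= d)%N -> (1 <= n)%N -> (1 <= m)%N ->
  POVM M1 -> POVM M2 ->
  Pbar M1 M2 > 2^-1 * (1 + d%:R / (n%:R * m%:R)) ->
  ~ compatible M1 M2.
Proof.
move=> d1 n1 m1 [pM1 sM1] [pM2 sM2] HP [G [pG sG rG cG]].
pose t x y := \sum_i Re (G x y i i).
have psdD (A B : 'M[R[i]]_d) : psd A -> psd B -> psd (A + B).
  move=> pA pB w; rewrite -/(form _ w w) formDm; apply: addr_ge0; [exact: pA|exact: pB].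
have t0 x y : 0 <= t x y.
  by apply: sumr_ge0 => i _; rewrite -form_delta2; apply: psdQ.
have e0 : vnorm2 (delta_mx (Ordinal d1) 0 : 'cV[R[i]]_d) = 1.
  by rewrite -Q1 /Q form_delta2 mxE eqxx.
have key x y : opnorm (M1 x + M2 y) <= 1 + t x y.
  apply: ge_sup.
    by exists (Num.sqrt (vnorm2 ((M1 x + M2 y) *m delta_mx (Ordinal d1) 0))); exists (delta_mx (Ordinal d1) 0).
  move=> _ [v v1 <-]; apply: opbound => //.
  - by apply: psdD.
  - by apply: addr_ge0.
  move=> w.
  have hV : vnorm2 w = \sum_(a < n) \sum_(b < m) Q (G a b) w.
    rewrite -Q1 -sG Q_sum; apply: eq_bigr => a _; exact: Q_sum.
  have hc := @comb _ n m (fun a b => Q (G a b) w) x y (fun a b => @psdQ _ _ (G a b) w (pG a b)).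
  have hg := @Gbound _ _ (G x y) w (pG x y).
  rewrite /Q formDm ReD -!/(Q _ w) -rG -cG !Q_sum -/(t x y).
  rewrite /= in hc hg.
  rewrite -/(t x y) in hg.
  lra.
have hs : \sum_(x < n) \sum_(y < m) t x y = d%:R.
  have -> : \sum_(x < n) \sum_(y < m) t x y = \sum_i Re ((\sum_(x < n) \sum_(y < m) G x y) i i).
    rewrite /t; symmetry.
    transitivity (\sum_i \sum_(x < n) \sum_(y < m) Re (G x y i i)).
      apply: eq_bigr => i _; rewrite summxE (raddf_sum (@Re R)); apply: eq_bigr => x _.
      by rewrite summxE (raddf_sum (@Re R)).
    rewrite exchange_big /=; apply: eq_bigr => x _.
    by rewrite exchange_big.
  rewrite sG; under eq_bigr => i _ do rewrite mxE eqxx.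
  by rewrite sumr_const card_ord.
have S : \sum_(x < n) \sum_(y < m) opnorm (M1 x + M2 y) <= n%:R * m%:R + d%:R.
  apply: (le_trans (y := \sum_(x < n) \sum_(y < m) (1 + t x y))).
    by apply: ler_sum => x _; apply: ler_sum => y _; apply: key.
  under eq_bigr => x _ do rewrite big_split /=.
  rewrite big_split /= hs sumr_const sumr_const !card_ord.
  by rewrite [n%:R * _]mulr_natl.
move: HP; rewrite /Pbar.
have np : 0 < n%:R :> R by rewrite ltr0n.
have mp : 0 < m%:R :> R by rewrite ltr0n.
have e : 2^-1 * (1 + d%:R / (n%:R * m%:R)) = (2 * n%:R * m%:R)^-1 * (n%:R * m%:R + d%:R) :> R.
  by field; rewrite !gt_eqF.
rewrite e ltr_pM2l ?invr_gt0 ?mulr_gt0 // ltNge.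
by rewrite S.
Qed.
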